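(* A topological space $X$ has the property $\bigcup_{\mathrm{fin}}(\mathcal O,\Gamma)$ if and only if for every sequence $(u_n)_{n\in\omega}$ of open covers of $X$ there exists a sequence $(v_n)_{n\in\omega}$, each $v_n$ a finite subset of $u_n$, such that, letting $w=\{\cup v_n:n\in\omega\}$, the semifilter $\uparrow\{\mu_w(x):x\in X\}$ is meager.
   Context: For an indexed family $w=\{W_n:n\in\omega\}$ of subsets of $X$ let $\mu_w(x)=\{n\in\omega:x\in W_n\}$. $A\subset^\ast B$ means $A\setminus B$ is finite. For a family $\mathcal A$ of subsets of $\omega$, $\uparrow\mathcal A=\{B\subset\omega:\exists A\in\mathcal A\ (A\subset^\ast B)\}$; meager refers to $\mathcal P(\omega)$ identified with the Cantor space $\{0,1\}^\omega$. $w$ is a $\gamma$-cover of $X$ if $\mu_w(x)$ is cofinite in $\omega$ for every $x\in X$. $X$ has $\bigcup_{\mathrm{fin}}(\mathcal O,\Gamma)$ if for every sequence $(u_n)_{n\in\omega}$ of open covers of $X$ there are finite $v_n\subset u_n$ such that $\{\cup v_n:n\in\omega\}$ is a $\gamma$-cover of $X$. *)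

(* Defs.v *)
From HB Require Import structures.
From mathcomp Require Import all_boot all_order all_algebra.
From mathcomp Require Import all_classical all_reals topology cantor.
Set Implicit Arguments. Unset Strict Implicit. Unset Printing Implicit Defensive.
Import numFieldTopology.Exports.
Local Open Scope classical_set_scope.

Definition open_cover (X : topologicalType) (u : set (set X)) : Prop :=
  (forall U, u U -> open U) /\ \bigcup_(U in u) U = [set: X].

Definition mu (X : Type) (W : nat -> set X) (x : X) : set nat := [set n | W n x].

Definition gamma_cover (X : Type) (W : nat -> set X) : Prop :=
  forall x, finite_set (~` mu W x).

(* upward closure modulo finite: B such that A \subset^* B for some A in F *)
Definition upstar (F : set (set nat)) : set (set nat) :=
  [set B | exists2 A, F A & finite_set (A `\` B)].

Definition nowhere_dense (T : topologicalType) (A : set T) : Prop :=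
  interior (closure A) = set0.

Definition meager (T : topologicalType) (A : set T) : Prop :=
  exists F : nat -> set T, (forall n, nowhere_dense (F n)) /\ A `<=` \bigcup_n F n.

(* meagerness in P(omega), identified with the Cantor space {0,1}^omega
   via B <-> indicator function of B *)
Definition meager_Pomega (S : set (set nat)) : Prop :=
  meager [set f : cantor_space | S [set n | f n = true]].

Definition Ufin_O_Gamma (X : topologicalType) : Prop :=
  forall u : nat -> set (set X), (forall n, open_cover (u n)) ->
  exists v : nat -> set (set X),
    (forall n, finite_set (v n) /\ v n `<=` u n) /\
    gamma_cover (fun n => \bigcup_(U in v n) U).

(* Main.v *)
Require Import Defs.
From HB Require Import structures.
From mathcomp Require Import all_boot all_order all_algebra.
From mathcomp Require Import all_classical all_reals topology cantor.
Import numFieldTopology.Exports.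
Local Open Scope classical_set_scope.
Set Implicit Arguments. Unset Strict Implicit.

Definition agree (f g : nat -> bool) m := forall i, (i < m)%N -> f i = g i.
Definition cyl (f : cantor_space) m : set cantor_space := [set g | agree f g m].

Lemma cyl_nbhs (f : cantor_space) m : nbhs f (cyl f m).
Proof.
elim: m => [|m IH].
  have -> : cyl f 0 = setT by apply/seteqP; split=> g //= _ i.
  exact: filterT.
have H : nbhs f ((@proj nat (fun _ => bool) m) @^-1` [set f m]).
  by apply: (@proj_continuous nat (fun _ => bool) m f); apply: discrete_set1.
apply: filterS (filterI IH H) => g [Hg Hm] i; rewrite ltnS leq_eqVlt.
by case/orP => [/eqP ->|/Hg //]; rewrite -Hm.
Qed.

Lemma nbhs_cyl (f : cantor_space) N : nbhs f N -> exists m, cyl f m `<=` N.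
Proof.
pose G : set_system cantor_space := [set N : set cantor_space | exists m, cyl f m `<=` N].
have GF : Filter G.
  constructor.
  - by exists 0 => g _.
  - move=> P Q [m Hm] [n Hn]; exists (maxn m n) => g Hg; split.
      by apply: Hm => i Hi; apply: Hg; apply: leq_trans Hi (leq_maxl _ _).
    by apply: Hn => i Hi; apply: Hg; apply: leq_trans Hi (leq_maxr _ _).
  - by move=> P Q PQ [m Hm]; exists m => g /Hm /PQ.
have : G --> f.
  apply/cvg_sup => i U [V] [[W] oW <-] WfN WU.
  apply: (filterS WU); exists i.+1 => g Hg /=.
  by rewrite -(Hg i (ltnSn i)).
by move=> /(_ N); apply.
Qed.

From mathcomp Require Import zify.

Lemma agree_trans f g h m : agree f g m -> agree g h m -> agree f h m.
Proof. by move=> H1 H2 i Hi; rewrite H1 // H2. Qed.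
Lemma agree_le f g m m' : (m <= m')%N -> agree f g m' -> agree f g m.
Proof. by move=> Hm H i Hi; apply: H; apply: leq_trans Hi Hm. Qed.
Lemma agree_sym f g m : agree f g m -> agree g f m.
Proof. by move=> H i Hi; rewrite H. Qed.

Lemma nd_dense (F : set cantor_space) : nowhere_dense F ->
  forall g m, exists g' m', (m <= m')%N /\ agree g g' m /\
    (forall h, agree g' h m' -> ~ F h).
Proof.
move=> nd g m; apply: contrapT => H.
suff : interior (closure F) g by rewrite nd.
apply: filterS (cyl_nbhs g m) => g' Hg' B /nbhs_cyl [m'' Hm''].
apply: contrapT => Hne; apply: H; exists g', (maxn m m''); split.
  exact: leq_maxl.
split => // h Hh Fh; apply: Hne; exists h; split => //; apply: Hm''.
exact: agree_le (leq_maxr _ _) Hh.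
Qed.

Lemma dense_nd (F : set cantor_space) :
  (forall g m, exists g' m', agree g g' m /\ (forall h, agree g' h m' -> ~ F h)) ->
  nowhere_dense F.
Proof.
move=> D; apply/seteqP; split => // g /nbhs_cyl [m Hm].
have [g' [m' [Hg' Hh]]] := D g m.
have [h [Fh Ch]] := Hm g' Hg' _ (cyl_nbhs g' m').
by have := Hh h Ch.
Qed.

Definition mono (A : (nat -> bool) -> nat -> Prop) :=
  forall g m g' m', A g m -> (m <= m')%N -> agree g g' m -> A g' m'.
Definition dens (A : (nat -> bool) -> nat -> Prop) :=
  forall g m, exists g' m', (m <= m')%N /\ agree g g' m /\ A g' m'.

Lemma unifQ A : mono A -> dens A -> forall n p j m0, exists m, (m0 <= m)%N /\
  forall f : nat -> bool, exists g, agree p g j /\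
    (forall i, (j <= i)%N -> (i < j + n)%N -> g i = f i) /\ A g m.
Proof.
move=> Mo De; elim=> [|n IH] p j m0.
  have [g' [m' [H1 [H2 H3]]]] := De p (maxn m0 j).
  exists m'; split; first by lia.
  move=> f; exists g'; split; first exact: agree_le (leq_maxr _ _) H2.
  by split => // i; lia.
pose p1 := fun i => if i == j then true else p i.
pose p0 := fun i => if i == j then false else p i.
have [m1 [Hm1 H1]] := IH p1 j.+1 m0.
have [m2 [Hm2 H2]] := IH p0 j.+1 m1.
exists m2; split; first by lia.
move=> f; case Hf: (f j).
  have [g [Ag [Rg Ag']]] := H1 f; exists g; split.
    move=> i Hi; rewrite -Ag; last by lia.
    by rewrite /p1; case: eqP => //; lia.
  split; last first.
    by apply: Mo Ag' Hm2 _ => i.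
  move=> i Hi1 Hi2; case: (eqVneq i j) => [->|Hij].
    by rewrite -Ag ?ltnSn // /p1 eqxx.
  by apply: Rg; lia.
have [g [Ag [Rg Ag']]] := H2 f; exists g; split.
  move=> i Hi; rewrite -Ag; last by lia.
  by rewrite /p0; case: eqP => //; lia.
split => //.
move=> i Hi1 Hi2; case: (eqVneq i j) => [->|Hij].
  by rewrite -Ag ?ltnSn // /p0 eqxx.
by apply: Rg; lia.
Qed.

Lemma unif A : mono A -> dens A -> forall k m0, exists m, (m0 <= m)%N /\
  forall f, exists g, agree f g k /\ A g m.
Proof.
move=> Mo De k m0; have [m [Hm H]] := unifQ Mo De k (fun _ => false) 0 m0.
exists m; split => // f; have [g [_ [Rg Ag]]] := H f; exists g; split => //.
by move=> i Hi; rewrite Rg.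
Qed.

Definition Aseq (F : nat -> set cantor_space) i (g : nat -> bool) m :=
  forall j, (j <= i)%N -> forall h, agree g h m -> ~ F j h.

Lemma Aseq_mono F i : mono (Aseq F i).
Proof.
move=> g m g' m' A Hm Ag j ji h Ah; apply: (A j ji).
apply: agree_trans Ag (agree_le Hm Ah).
Qed.

Lemma Aseq_dens F : (forall n, nowhere_dense (F n)) -> forall i, dens (Aseq F i).
Proof.
move=> nd; elim=> [|i IH] g m.
  have [g' [m' [H1 [H2 H3]]]] := nd_dense (nd 0) g m.
  by exists g', m'; split => //; split => // j; rewrite leqn0 => /eqP ->.
have [g1 [m1 [H1 [H2 H3]]]] := IH g m.
have [g2 [m2 [H4 [H5 H6]]]] := nd_dense (nd i.+1) g1 m1.
exists g2, m2; split; first by lia.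
split; first exact: agree_trans H2 (agree_le H1 H5).
move=> j; rewrite leq_eqVlt => /orP [/eqP ->|ji]; first exact: H6.
by apply: (Aseq_mono H3 H4 H5).
Qed.

Fixpoint kseq (nx : nat -> nat -> nat) i :=
  match i with 0 => 0 | i'.+1 => nx i' (kseq nx i') end.

Fixpoint gseq (k : nat -> nat) (tg : nat -> (nat -> bool) -> nat -> bool)
  (missed : nat -> Prop) (b : nat -> bool) i : nat -> bool :=
  match i with
  | 0 => b
  | i'.+1 => let gi := gseq k tg missed b i' in
     if pselect (missed i') then (fun n => if (n < k i'.+1)%N then tg i' gi n else gi n)
     else gi
  end.

Section kfacts.
Variable k : nat -> nat.
Hypothesis k0 : k 0 = 0.
Hypothesis klt : forall i, (k i < k i.+1)%N.

Lemma kmono i j : (i <= j)%N -> (k i <= k j)%N.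
Proof.
elim: j => [|j IH]; first by rewrite leqn0 => /eqP ->.
rewrite leq_eqVlt => /orP [/eqP ->//|/IH H]; have := klt j; lia.
Qed.

Lemma kge i : (i <= k i)%N.
Proof. elim: i => [|i IH] //; have := klt i; lia. Qed.

Lemma kint n : exists i, (k i <= n)%N /\ (n < k i.+1)%N.
Proof.
elim: n => [|n [i [H1 H2]]]; first by exists 0; rewrite k0; split => //; have := klt 0; lia.
case: (ltnP n.+1 (k i.+1)) => H.
  by exists i; split => //; lia.
exists i.+1; split; first by lia.
have := klt i.+1; lia.
Qed.
End kfacts.

Lemma meager_intervals (I : Type) (M : I -> set nat) :
  meager_Pomega (upstar (range M)) ->
  exists k : nat -> nat, k 0 = 0 /\ (forall i, (k i < k i.+1)%N) /\
    forall x, exists J, forall i, (J <= i)%N ->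
      exists n, (k i <= n)%N /\ (n < k i.+1)%N /\ M x n.
Proof.
move=> [F [ndF cov]].
have AD := Aseq_dens ndF.
have H : forall p : nat * nat, exists m, (p.2 < m)%N /\
    forall f, exists g, agree f g p.2 /\ Aseq F p.1 g m.
  by move=> [i k]; have [m [Hm H]] := unif (@Aseq_mono F i) (AD i) k k.+1; exists m.
have [nx Hnx] := choice H.
pose k := kseq (fun i k => nx (i, k)).
have k0 : k 0 = 0 by [].
have kS : forall i, k i.+1 = nx (i, k i) by [].
have klt : forall i, (k i < k i.+1)%N.
  by move=> i; rewrite kS; exact: (Hnx (i, k i)).1.
have H2 : forall q : nat * (nat -> bool),
    exists g, agree q.2 g (k q.1) /\ Aseq F q.1 g (k q.1.+1).
  by move=> [i f]; rewrite /= kS; exact: (Hnx (i, k i)).2 f.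
have [tg Htg] := choice H2.
exists k; split => //; split => // x.
apply: contrapT => Hno.
pose missed i := forall n, (k i <= n)%N -> (n < k i.+1)%N -> ~ M x n.
have Hmiss : forall J, exists i, (J <= i)%N /\ missed i.
  move=> J; apply: contrapT => HJ; apply: Hno; exists J => i Ji.
  apply: contrapT => Hi; apply: HJ; exists i; split => // n H1 H3 Mn.
  by apply: Hi; exists n.
pose b n := `[< M x n >].
pose tg' i f := tg (i, f).
pose g := gseq k tg' missed b.
have gS : forall i, g i.+1 = if pselect (missed i) then
   (fun n => if (n < k i.+1)%N then tg' i (g i) n else g i n) else g i by [].
have ga : forall i n, (k i <= n)%N -> g i n = b n.
  elim=> [|i IH] n Hn //; rewrite gS; case: pselect => Hq; last first.
    by apply: IH; have := klt i; lia.
  by rewrite /=; case: ifP => [?|_]; [lia | apply: IH; have := klt i; lia].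
have gb : forall i m, (i <= m)%N -> forall n, (n < k i)%N -> g m n = g i n.
  move=> i m; elim: m => [|m IH]; first by rewrite leqn0 => /eqP ->.
  rewrite leq_eqVlt => /orP [/eqP ->//|Him] n Hn.
  rewrite -(IH Him n Hn) gS; case: pselect => Hq //.
  have Hkn : (n < k m)%N by exact: (leq_trans Hn (@kmono k k0 klt i m Him)).
  rewrite /= ifT; last by have := klt m; lia.
  by rewrite /tg' -((Htg (m, g m)).1 n Hkn).
pose B' : cantor_space := fun n => g n.+1 n.
have gB : forall i n, (n < k i)%N -> B' n = g i n.
  move=> i n Hn; rewrite /B'; case: (leqP n.+1 i) => Hi.
    rewrite (gb n.+1 i Hi n) //; have := kge k0 klt n.+1; lia.
  by apply: gb => //; lia.
have Bsup : forall n, M x n -> B' n = true.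
  move=> n Mn; have [i [H3 H4]] := kint k0 klt n.
  rewrite (gB i.+1 n H4) gS; case: pselect => Hm.
    by exfalso; apply: (Hm n).
  by rewrite /= ga // /b asboolT.
have SB : upstar (range M) [set n | B' n = true].
  exists (M x); first by exists x.
  have -> : M x `\` [set n | B' n = true] = set0.
    by apply/seteqP; split => [n [/Bsup Hb nB]|n //]; exact: nB Hb.
  exact: finite_set0.
have [j _ Fj] := cov B' SB.
have [i [ji Hi]] := Hmiss j.
have A := (Htg (i, g i)).2.
apply: (A j ji B') => // n Hn.
rewrite (gB i.+1 n Hn) gS; case: pselect => // Hm'.
by rewrite /= ifT.

Qed.

Lemma finite_nat_bound (S : set nat) : finite_set S -> exists N, forall n, S n -> (n < N)%N.
Proof.
move/finite_seqP => [s ->]; exists (sumn s).+1 => n /=.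
elim: s => [|a s IH] //=; rewrite in_cons => /orP [/eqP ->|/IH]; lia.
Qed.

Lemma cofinite_meager (S : set (set nat)) :
  (forall B, S B -> finite_set (~` B)) -> meager_Pomega S.
Proof.
move=> HS; exists (fun N => [set f : cantor_space | forall m, (N <= m)%N -> f m = true]).
split.
  move=> N; apply: dense_nd => g m.
  exists (fun i => if i == maxn m N then false else g i), (maxn m N).+1; split.
    by move=> i Hi; case: eqP => //; lia.
  move=> h Hh Fh; have := Fh (maxn m N) (leq_maxr _ _).
  by rewrite -Hh ?ltnSn // eqxx.
move=> f /HS /finite_nat_bound [N HN]; exists N => // m Nm.
by apply: contrapT => Hf; have := HN m Hf; lia.
Qed.

Lemma open_bigI (X : topologicalType) n (U : nat -> set X) :
  (forall j, (j <= n)%N -> open (U j)) -> open [set y | forall j, (j <= n)%N -> U j y].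
Proof.
elim: n => [|n IH] HU.
  have -> : [set y | forall j, (j <= 0)%N -> U j y] = U 0.
    apply/seteqP; split => y; first by move=> H; exact: H 0 (leqnn 0).
    by move=> Hy j; rewrite leqn0 => /eqP ->.
  exact: HU.
have -> : [set y | forall j, (j <= n.+1)%N -> U j y] =
    [set y | forall j, (j <= n)%N -> U j y] `&` U n.+1.
  apply/seteqP; split => y.
    by move=> H; split; [move=> j Hj; apply: H; lia | apply: H].
  by move=> [H1 H2] j; rewrite leq_eqVlt => /orP [/eqP -> // | /H1].
apply: openI; [apply: IH => j Hj; apply: HU; lia | exact: HU].
Qed.

Theorem proposition9 (X : topologicalType) :
  Ufin_O_Gamma X <->
  (forall u : nat -> set (set X), (forall n, open_cover (u n)) ->
   exists v : nat -> set (set X),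
     (forall n, finite_set (v n) /\ v n `<=` u n) /\
     meager_Pomega (upstar (range (mu (fun n => \bigcup_(U in v n) U))))).
Proof.
split.
  move=> H u Hu; have [v [Hv Hg]] := H u Hu; exists v; split => //.
  apply: cofinite_meager => B [A [x _ <-] Hfin].
  apply: (sub_finite_set (B := (mu (fun n => \bigcup_(U in v n) U) x `\` B) `|`
     ~` mu (fun n => \bigcup_(U in v n) U) x)); last first.
    by rewrite finite_setU; split => //; exact: Hg.
  move=> n nB; case: (pselect (mu (fun n => \bigcup_(U in v n) U) x n)) => Hn.
    by left.
  by right.
move=> H u Hu.
pose inter n (U : nat -> set X) := [set y | forall j, (j <= n)%N -> U j y].
pose u' n := [set W | exists U, (forall j, (j <= n)%N -> u j (U j)) /\ W = inter n U].
have Hu' : forall n, open_cover (u' n).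
  move=> n; split.
    move=> W [U [HU ->]]; apply: open_bigI => j Hj; exact: (Hu j).1 _ (HU j Hj).
  apply/seteqP; split => // y _.
  have : forall j, exists U, u j U /\ U y.
    move=> j; have : [set: X] y by [].
    by rewrite -(Hu j).2 => -[U uU Uy]; exists U.
  move/choice => [U HU].
  exists (inter n U); first by exists U; split => // j _; exact: (HU j).1.
  by move=> j _; exact: (HU j).2.
have [v [Hv Hmg]] := H u' Hu'.
have [k [k0 [klt Hk]]] := meager_intervals Hmg.
have HC : forall p : nat * set X, exists U : nat -> set X, u' p.1 p.2 ->
    (forall j, (j <= p.1)%N -> u j (U j)) /\ p.2 = inter p.1 U.
  move=> [n W]; case: (pselect (u' n W)) => [[U HU]|nW].
    by exists U.
  by exists (fun _ => set0).
have [comp Hcomp] := choice HC.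
exists (fun m => [set U | exists n, [/\ (k m <= n)%N, (n < k m.+1)%N &
   exists2 W, v n W & U = comp (n, W) m]]).
split.
  move=> m; split.
    apply: (sub_finite_set (B := \bigcup_(n in `I_(k m.+1))
       ((fun W => comp (n, W) m) @` v n))).
      by move=> U [n [H1 H2 [W vW ->]]]; exists n => //; exists W.
    apply: bigcup_finite; first exact: finite_II.
    by move=> n _; apply: finite_image; exact: (Hv n).1.
  move=> U [n [H1 H2 [W vW ->]]].
  have [HU _] := Hcomp (n, W) ((Hv n).2 W vW).
  apply: HU; apply: leq_trans H1; exact: kge k0 klt m.
move=> x; have [J HJ] := Hk x.
apply: (sub_finite_set (B := `I_J)); last exact: finite_II.
move=> m Hm /=; case: (ltnP m J) => // Jm; exfalso; apply: Hm.
have [n [H1 [H2 [W vW Wx]]]] := HJ m Jm.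
exists (comp (n, W) m); first by exists n; split => //; exists W.
have [_ HW] := Hcomp (n, W) ((Hv n).2 W vW).
have Wx' : inter n (comp (n, W)) x by rewrite -HW.
apply: Wx'.
apply: leq_trans H1; exact: kge k0 klt m.
Qed.
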